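(* Let $P:\mathcal C^{op}\to\mathbf{Heyt}$ be a weak hyperdoctrine with full weak comprehensions and comprehensive diagonals, and suppose $\Psi_{\mathcal C}$ is a weak hyperdoctrine. Then for every $\alpha\in P(X\times Y)$ and all $\gamma,\beta\in P(A)$: $\{\forall^P_{pr_1}(\alpha)\}=\forall^{\Psi_{\mathcal C}}_{pr_1}\{\alpha\}$ and $\{\gamma\Rightarrow^P\beta\}=\{\gamma\}\Rightarrow^{\Psi_{\mathcal C}}\{\beta\}$ as elements of $\Psi_{\mathcal C}(X)$, resp. $\Psi_{\mathcal C}(A)$. If moreover the comprehensions are strong (monic) and $\mathrm{Sub}_{\mathcal C}$ is a weak hyperdoctrine, the same equalities hold with $\mathrm{Sub}_{\mathcal C}$ in place of $\Psi_{\mathcal C}$.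
   Context: A weak hyperdoctrine is an elementary doctrine (equality predicates $\delta_A$, written $=_A$) over a weakly cartesian closed base with Heyting fibres and reindexing, and left and right adjoints $\exists_{pr_1},\forall_{pr_1}$ to reindexing along product projections $pr_1:X\times Y\to X$ satisfying Beck–Chevalley. A weak comprehension of $\alpha\in P(A)$ is an arrow $\{\alpha\}:Z\to A$ with $\top\le P_{\{\alpha\}}(\alpha)$ through which every $f$ with $\top\le P_f(\alpha)$ factors (not necessarily uniquely); it is strong if $\{\alpha\}$ is monic; full weak comprehensions: all exist and $\alpha\le\beta$ whenever $\{\alpha\}$ factors through $\{\beta\}$. Comprehensive diagonals: $f=g$ whenever $\top\vdash f(x)=_Yg(x)$. $\Psi_{\mathcal C}$ sends $A$ to the poset reflection of $\mathcal C/A$, reindexing by weak pullback; $\mathrm{Sub}_{\mathcal C}$ is the subobject doctrine. In the equalities, $\{\alpha\}$ denotes the class $[\{\alpha\}]$ in $\Psi_{\mathcal C}$ (resp. the subobject in $\mathrm{Sub}_{\mathcal C}$), and superscripts indicate in which doctrine the operation is computed. *)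

(* Defs.v *)
Set Implicit Arguments.
Unset Strict Implicit.

(* Weakly cartesian closed categories: a category with (strict) finite  *)
(* products and weak exponentials.  Equality of arrows is Leibniz.       *)
Record WCCC : Type := MkWCCC {
  Ob : Type;
  Hom : Ob -> Ob -> Type;
  idm : forall A, Hom A A;
  comp : forall A B D, Hom B D -> Hom A B -> Hom A D;
  comp_idl : forall A B (f : Hom A B), comp (idm B) f = f;
  comp_idr : forall A B (f : Hom A B), comp f (idm A) = f;
  comp_assoc : forall A B D E (f : Hom A B) (g : Hom B D) (h : Hom D E),
      comp h (comp g f) = comp (comp h g) f;
  term : Ob;
  bang : forall A, Hom A term;
  bang_uniq : forall A (f : Hom A term), f = bang A;
  prod : Ob -> Ob -> Ob;
  pr1 : forall A B, Hom (prod A B) A;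
  pr2 : forall A B, Hom (prod A B) B;
  pair : forall X A B, Hom X A -> Hom X B -> Hom X (prod A B);
  pr1_pair : forall X A B (f : Hom X A) (g : Hom X B), comp (pr1 A B) (pair f g) = f;
  pr2_pair : forall X A B (f : Hom X A) (g : Hom X B), comp (pr2 A B) (pair f g) = g;
  pair_eta : forall X A B (h : Hom X (prod A B)),
      pair (comp (pr1 A B) h) (comp (pr2 A B) h) = h;
  (* weak exponential  wexp B A = B^A  with evaluation wev *)
  wexp : Ob -> Ob -> Ob;
  wev : forall A B, Hom (prod (wexp B A) A) B;
  wcurry : forall D A B (f : Hom (prod D A) B),
      exists h : Hom D (wexp B A),
        comp (wev A B) (pair (comp h (pr1 D A)) (pr2 D A)) = f
}.

Arguments Hom {w} _ _.
Arguments idm {w} A.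
Arguments comp {w A B D} _ _.
Arguments term {w}.
Arguments bang {w} A.
Arguments prod {w} _ _.
Arguments pr1 {w A B}.
Arguments pr2 {w A B}.
Arguments pair {w X A B} _ _.

Notation "g ∘ f" := (comp g f) (at level 40, left associativity).

Section Derived.
Variable C : WCCC.

Definition pmap (A B A' B' : Ob C) (f : Hom A A') (g : Hom B B')
  : Hom (prod A B) (prod A' B') := pair (f ∘ pr1) (g ∘ pr2).

Definition diag (A : Ob C) : Hom A (prod A A) := pair (idm A) (idm A).

Definition p13 (A B : Ob C) : Hom (prod (prod A B) (prod A B)) (prod A A) :=
  pair (pr1 ∘ pr1) (pr1 ∘ pr2).
Definition p24 (A B : Ob C) : Hom (prod (prod A B) (prod A B)) (prod B B) :=
  pair (pr2 ∘ pr1) (pr2 ∘ pr2).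

Definition mono (Z A : Ob C) (m : Hom Z A) : Prop :=
  forall W (u v : Hom W Z), m ∘ u = m ∘ v -> u = v.

Definition factors (Z W A : Ob C) (c : Hom Z A) (d : Hom W A) : Prop :=
  exists h : Hom Z W, d ∘ h = c.
End Derived.

Arguments pmap {C A B A' B'} _ _.
Arguments diag {C} A.
Arguments p13 {C} A B.
Arguments p24 {C} A B.
Arguments mono {C Z A} _.
Arguments factors {C Z W A} _ _.

(* Everything is stated up to the equivalence of the preorder, so that  *)
(* the same notion applies to Psi_C and Sub_C (whose fibres are the     *)
(* poset reflections of the preorders below).                           *)
Section Hyperdoctrine.
Variable C : WCCC.
Variable F : Ob C -> Type.
Variable le : forall A, F A -> F A -> Prop.
Variable re : forall A B, Hom A B -> F B -> F A.

Arguments le {A} _ _.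
Arguments re {A B} _ _.

Definition feq (A : Ob C) (x y : F A) : Prop := le x y /\ le y x.

Record WeakHyperdoctrine : Type := {
  le_refl : forall A (x : F A), le x x;
  le_trans : forall A (x y z : F A), le x y -> le y z -> le x z;
  re_mono : forall A B (f : Hom A B) (x y : F B), le x y -> le (re f x) (re f y);
  re_id : forall A (x : F A), feq (re (idm A) x) x;
  re_comp : forall A B D (f : Hom A B) (g : Hom B D) (x : F D),
      feq (re (g ∘ f) x) (re f (re g x));
  top : forall A, F A;
  bot : forall A, F A;
  meet : forall A, F A -> F A -> F A;
  join : forall A, F A -> F A -> F A;
  impl : forall A, F A -> F A -> F A;
  top_max : forall A (x : F A), le x (top A);
  bot_min : forall A (x : F A), le (bot A) x;
  meet_spec : forall A (x y z : F A), le z (meet x y) <-> (le z x /\ le z y);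
  join_spec : forall A (x y z : F A), le (join x y) z <-> (le x z /\ le y z);
  impl_spec : forall A (x y z : F A), le z (impl x y) <-> le (meet z x) y;
  re_top : forall A B (f : Hom A B), feq (re f (top B)) (top A);
  re_bot : forall A B (f : Hom A B), feq (re f (bot B)) (bot A);
  re_meet : forall A B (f : Hom A B) (x y : F B),
      feq (re f (meet x y)) (meet (re f x) (re f y));
  re_join : forall A B (f : Hom A B) (x y : F B),
      feq (re f (join x y)) (join (re f x) (re f y));
  re_impl : forall A B (f : Hom A B) (x y : F B),
      feq (re f (impl x y)) (impl (re f x) (re f y));
  ex : forall X Y, F (prod X Y) -> F X;
  fa : forall X Y, F (prod X Y) -> F X;
  ex_adj : forall X Y (a : F (prod X Y)) (b : F X),
      le (ex a) b <-> le a (re pr1 b);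
  fa_adj : forall X Y (a : F (prod X Y)) (b : F X),
      le b (fa a) <-> le (re pr1 b) a;
  ex_BC : forall X' X Y (f : Hom X' X) (a : F (prod X Y)),
      feq (re f (ex a)) (ex (re (pmap f (idm Y)) a));
  fa_BC : forall X' X Y (f : Hom X' X) (a : F (prod X Y)),
      feq (re f (fa a)) (fa (re (pmap f (idm Y)) a));
  delta : forall A, F (prod A A);
  delta_refl : forall A, le (top A) (re (diag A) (delta A));
  delta_subst : forall A (a : F A), le (meet (re pr1 a) (delta A)) (re pr2 a);
  delta_prod : forall A B,
      le (meet (re (p13 A B) (delta A)) (re (p24 A B) (delta B))) (delta (prod A B))
}.


Definition isWComp (H : WeakHyperdoctrine) (A : Ob C) (alpha : F A)
    (Z : Ob C) (c : Hom Z A) : Prop :=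
  le (top H Z) (re c alpha) /\
  forall W (f : Hom W A), le (top H W) (re f alpha) -> factors f c.

Definition FullWeakComprehensions (H : WeakHyperdoctrine) : Prop :=
  (forall A (alpha : F A), exists Z (c : Hom Z A), isWComp H alpha c) /\
  (forall A (alpha beta : F A) Z (c : Hom Z A) W (d : Hom W A),
      isWComp H alpha c -> isWComp H beta d -> factors c d -> le alpha beta).

Definition StrongComprehensions (H : WeakHyperdoctrine) : Prop :=
  forall A (alpha : F A), exists Z (c : Hom Z A), isWComp H alpha c /\ mono c.

Definition ComprehensiveDiagonals (H : WeakHyperdoctrine) : Prop :=
  forall X Y (f g : Hom X Y), le (top H X) (re (pair f g) (delta H Y)) -> f = g.

Definition FibresPosets : Prop :=
  forall A (x y : F A), le x y -> le y x -> x = y.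
End Hyperdoctrine.

Arguments feq {C F} le {A} _ _.
Arguments top {C F le re} w A.
Arguments impl {C F le re} w {A} _ _.
Arguments fa {C F le re} w {X Y} _.
Arguments delta {C F le re} w A.
Arguments isWComp {C F le re} H {A} alpha {Z} c.
Arguments FullWeakComprehensions {C F le re} H.
Arguments StrongComprehensions {C F le re} H.
Arguments ComprehensiveDiagonals {C F le re} H.
Arguments FibresPosets {C F} le.

(* The doctrine Psi_C: fibre over A = preorder reflected to C/A,       *)
(* reindexing by (chosen) weak pullbacks.                               *)
Record WeakPullbacks (C : WCCC) : Type := {
  wpbO : forall A B D (f : Hom A D) (g : Hom B D), Ob C;
  wpb1 : forall A B D (f : Hom A D) (g : Hom B D), Hom (wpbO f g) A;
  wpb2 : forall A B D (f : Hom A D) (g : Hom B D), Hom (wpbO f g) B;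
  wpb_comm : forall A B D (f : Hom A D) (g : Hom B D), f ∘ wpb1 f g = g ∘ wpb2 f g;
  wpb_univ : forall A B D (f : Hom A D) (g : Hom B D) W (u : Hom W A) (v : Hom W B),
      f ∘ u = g ∘ v -> exists h : Hom W (wpbO f g), wpb1 f g ∘ h = u /\ wpb2 f g ∘ h = v
}.

Section Psi.
Variable C : WCCC.

Definition PsiF (A : Ob C) : Type := { Z : Ob C & Hom Z A }.
Definition PsiLe (A : Ob C) (x y : PsiF A) : Prop := factors (projT2 x) (projT2 y).
Definition psi (A Z : Ob C) (c : Hom Z A) : PsiF A := existT _ Z c.
Definition PsiRe (wp : WeakPullbacks C) (A B : Ob C) (f : Hom A B) (x : PsiF B) : PsiF A :=
  existT _ (wpbO wp f (projT2 x)) (wpb1 wp f (projT2 x)).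
End Psi.

Arguments psi {C A Z} c.
Arguments PsiF C A : clear implicits.
Arguments PsiLe C A : clear implicits.

(* The subobject doctrine Sub_C: monos into A preordered by factoring   *)
(* (poset reflection = subobjects), reindexing by (chosen) pullbacks    *)
(* of monos.                                                            *)
Record MonoPullbacks (C : WCCC) : Type := {
  mpbO : forall A B Z (g : Hom B A) (m : Hom Z A), mono m -> Ob C;
  mpb1 : forall A B Z (g : Hom B A) (m : Hom Z A) (hm : mono m), Hom (mpbO g hm) B;
  mpb2 : forall A B Z (g : Hom B A) (m : Hom Z A) (hm : mono m), Hom (mpbO g hm) Z;
  mpb_comm : forall A B Z (g : Hom B A) (m : Hom Z A) (hm : mono m),
      g ∘ mpb1 g hm = m ∘ mpb2 g hm;
  mpb_ex : forall A B Z (g : Hom B A) (m : Hom Z A) (hm : mono m) W (u : Hom W B) (v : Hom W Z),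
      g ∘ u = m ∘ v -> exists h : Hom W (mpbO g hm), mpb1 g hm ∘ h = u /\ mpb2 g hm ∘ h = v;
  mpb_uniq : forall A B Z (g : Hom B A) (m : Hom Z A) (hm : mono m) W (h h' : Hom W (mpbO g hm)),
      mpb1 g hm ∘ h = mpb1 g hm ∘ h' -> mpb2 g hm ∘ h = mpb2 g hm ∘ h' -> h = h'
}.

Section Sub.
Variable C : WCCC.

Definition SubF (A : Ob C) : Type := { Z : Ob C & { m : Hom Z A | mono m } }.
Definition SubLe (A : Ob C) (x y : SubF A) : Prop :=
  factors (proj1_sig (projT2 x)) (proj1_sig (projT2 y)).
Definition sub (A Z : Ob C) (m : Hom Z A) (hm : mono m) : SubF A :=
  existT _ Z (exist _ m hm).

Lemma mpb1_mono (pb : MonoPullbacks C) A B Z (g : Hom B A) (m : Hom Z A) (hm : mono m) :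
  mono (mpb1 pb g hm).
Proof.
  intros W u v E.
  apply (mpb_uniq E).
  apply hm.
  rewrite !comp_assoc, <- !(mpb_comm pb g hm), <- !comp_assoc, E. reflexivity.
Qed.

Definition SubRe (pb : MonoPullbacks C) (A B : Ob C) (f : Hom A B) (x : SubF B) : SubF A :=
  existT _ (mpbO pb f (proj2_sig (projT2 x)))
    (exist _ (mpb1 pb f (proj2_sig (projT2 x))) (@mpb1_mono pb _ _ _ f _ (proj2_sig (projT2 x)))).
End Sub.

Arguments sub {C A Z} m hm.
Arguments SubF C A : clear implicits.
Arguments SubLe C A : clear implicits.

(* Main.v *)
Require Import Defs.
Set Implicit Arguments.

Lemma lt_ {C : WCCC} {F : Ob C -> Type} {le : forall A, F A -> F A -> Prop}
  {re : forall A B, Hom A B -> F B -> F A} (P : WeakHyperdoctrine le re)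
  A (x y z : F A) : le A x y -> le A y z -> le A x z.
Proof. apply (le_trans P). Qed.

Lemma top_factor {C : WCCC} {F : Ob C -> Type} {le : forall A, F A -> F A -> Prop}
  {re : forall A B, Hom A B -> F B -> F A} (P : WeakHyperdoctrine le re)
  A (alpha : F A) Z (c : Hom Z A) W (h : Hom W Z) :
  isWComp P alpha c -> le W (top P W) (re W A (c ∘ h) alpha).
Proof.
  intros [Hc _].
  eapply (lt_ P). apply (proj2 (re_top P h)).
  eapply (lt_ P). apply (re_mono P h Hc).
  apply (proj2 (re_comp P h c alpha)).
Qed.

Lemma fact_top {C : WCCC} {F : Ob C -> Type} {le : forall A, F A -> F A -> Prop}
  {re : forall A B, Hom A B -> F B -> F A} (P : WeakHyperdoctrine le re)
  A (alpha : F A) Z (c : Hom Z A) W (f : Hom W A) :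
  isWComp P alpha c -> factors f c -> le W (top P W) (re W A f alpha).
Proof. intros H [h E]. subst f. apply top_factor; auto. Qed.

Lemma fa_key {C : WCCC} {F : Ob C -> Type} {le : forall A, F A -> F A -> Prop}
  {re : forall A B, Hom A B -> F B -> F A} (P : WeakHyperdoctrine le re)
  X Y (alpha : F (prod X Y)) Z (c : Hom Z (prod X Y)) W (d : Hom W X) V (f : Hom V X) :
  isWComp P alpha c -> isWComp P (fa P alpha) d ->
  factors (pmap f (idm Y)) c -> factors f d.
Proof.
  intros Hc Hd Hk. apply (proj2 Hd).
  eapply (lt_ P). 2: apply (proj2 (fa_BC P f alpha)).
  apply (fa_adj P).
  eapply (lt_ P). apply (top_max P).
  apply (fact_top (P:=P) Hc Hk).
Qed.

Lemma fa_key2 {C : WCCC} {F : Ob C -> Type} {le : forall A, F A -> F A -> Prop}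
  {re : forall A B, Hom A B -> F B -> F A} (P : WeakHyperdoctrine le re)
  X Y (alpha : F (prod X Y)) Z (c : Hom Z (prod X Y)) W (d : Hom W X)
  Q (q : Hom Q (prod X Y)) (p : Hom Q W) :
  isWComp P alpha c -> isWComp P (fa P alpha) d ->
  pr1 ∘ q = d ∘ p -> factors q c.
Proof.
  intros Hc Hd E. apply (proj2 Hc).
  assert (Hcu : le _ (re _ _ pr1 (fa P alpha)) alpha)
    by (apply (fa_adj P); apply (le_refl P)).
  eapply (lt_ P). 2: apply (re_mono P q Hcu).
  eapply (lt_ P). 2: apply (proj1 (re_comp P q pr1 _)).
  rewrite E.
  apply (top_factor (P:=P) _ p Hd).
Qed.

Lemma impl_key1 {C : WCCC} {F : Ob C -> Type} {le : forall A, F A -> F A -> Prop}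
  {re : forall A B, Hom A B -> F B -> F A} (P : WeakHyperdoctrine le re)
  A (gamma beta : F A) Zg (cg : Hom Zg A) Zb (cb : Hom Zb A) Zi (ci : Hom Zi A)
  M (m : Hom M A) :
  isWComp P gamma cg -> isWComp P beta cb -> isWComp P (impl P gamma beta) ci ->
  factors m ci -> factors m cg -> factors m cb.
Proof.
  intros Hg Hb Hi Fi Fg. apply (proj2 Hb).
  pose proof (fact_top (P:=P) Hi Fi) as T1.
  pose proof (fact_top (P:=P) Hg Fg) as T2.
  assert (MP : le _ (meet P (impl P gamma beta) gamma) beta)
    by (apply (impl_spec P); apply (le_refl P)).
  eapply (lt_ P). 2: apply (re_mono P m MP).
  eapply (lt_ P). 2: apply (proj2 (re_meet P m _ _)).
  apply (meet_spec P). split; auto.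
Qed.

Lemma impl_key2 {C : WCCC} {F : Ob C -> Type} {le : forall A, F A -> F A -> Prop}
  {re : forall A B, Hom A B -> F B -> F A} (P : WeakHyperdoctrine le re)
  (Pcomp : FullWeakComprehensions P)
  A (gamma beta : F A) Zb (cb : Hom Zb A) Zi (ci : Hom Zi A)
  V (f : Hom V A) E (e : Hom E V) :
  isWComp P beta cb -> isWComp P (impl P gamma beta) ci ->
  isWComp P (re _ _ f gamma) e -> factors (f ∘ e) cb -> factors f ci.
Proof.
  intros Hb Hi He Fb. apply (proj2 Hi).
  destruct (proj1 Pcomp V (re _ _ f beta)) as [E' [e' He']].
  assert (LE : le _ (re _ _ f gamma) (re _ _ f beta)).
  { apply (proj2 Pcomp _ _ _ _ _ _ _ He He').
    apply (proj2 He').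
    eapply (lt_ P). apply (fact_top (P:=P) Hb Fb).
    apply (proj1 (re_comp P e f beta)). }
  eapply (lt_ P). 2: apply (proj2 (re_impl P f _ _)).
  apply (impl_spec P).
  eapply (lt_ P). 2: apply LE.
  apply (proj2 (proj1 (meet_spec P _ _ _) (le_refl P _))).
Qed.

Lemma fg_cg {C : WCCC} {F : Ob C -> Type} {le : forall A, F A -> F A -> Prop}
  {re : forall A B, Hom A B -> F B -> F A} (P : WeakHyperdoctrine le re)
  A (gamma : F A) Zg (cg : Hom Zg A) V (f : Hom V A) E (e : Hom E V) :
  isWComp P gamma cg -> isWComp P (re _ _ f gamma) e -> factors (f ∘ e) cg.
Proof.
  intros Hg He. apply (proj2 Hg).
  eapply (lt_ P). apply (proj1 He).
  apply (proj2 (re_comp P e f gamma)).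
Qed.

Lemma pmap_pr1 (C : WCCC) (V X Y : Ob C) (f : Hom V X) :
  pr1 ∘ pmap f (idm Y) = f ∘ pr1.
Proof. unfold pmap. apply pr1_pair. Qed.

Lemma comp_mono (C : WCCC) (A B D : Ob C) (f : Hom B D) (g : Hom A B) :
  mono f -> mono g -> mono (f ∘ g).
Proof.
  intros Hf Hg W u v E. apply Hg. apply Hf.
  rewrite !comp_assoc. exact E.
Qed.


Unset Implicit Arguments.

Theorem corollary2p5
  (C : WCCC)
  (F : Ob C -> Type)
  (le : forall A, F A -> F A -> Prop)
  (re : forall A B, Hom A B -> F B -> F A)
  (P : WeakHyperdoctrine le re)
  (Pposet : FibresPosets le)
  (Pcomp : FullWeakComprehensions P)
  (Pdiag : ComprehensiveDiagonals P)
  (wp : WeakPullbacks C)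
  (Psi : WeakHyperdoctrine (PsiLe C) (PsiRe wp)) :
  (* {forall^P_{pr1} alpha} = forall^{Psi}_{pr1} {alpha} in Psi_C(X) *)
  (forall (X Y : Ob C) (alpha : F (prod X Y))
          (Z : Ob C) (c : Hom Z (prod X Y)) (W : Ob C) (d : Hom W X),
      isWComp P alpha c -> isWComp P (fa P alpha) d ->
      feq (PsiLe C) (psi d) (fa Psi (psi c)))
  /\
  (* {gamma =>^P beta} = {gamma} =>^{Psi} {beta} in Psi_C(A) *)
  (forall (A : Ob C) (gamma beta : F A)
          (Zg : Ob C) (cg : Hom Zg A) (Zb : Ob C) (cb : Hom Zb A)
          (Zi : Ob C) (ci : Hom Zi A),
      isWComp P gamma cg -> isWComp P beta cb -> isWComp P (impl P gamma beta) ci ->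
      feq (PsiLe C) (psi ci) (impl Psi (psi cg) (psi cb)))
  /\
  (* the same with Sub_C, when comprehensions are strong and Sub_C is a weak hyperdoctrine *)
  (StrongComprehensions P ->
   forall (pb : MonoPullbacks C) (Sub : WeakHyperdoctrine (SubLe C) (SubRe pb)),
   (forall (X Y : Ob C) (alpha : F (prod X Y))
           (Z : Ob C) (c : Hom Z (prod X Y)) (hc : mono c)
           (W : Ob C) (d : Hom W X) (hd : mono d),
       isWComp P alpha c -> isWComp P (fa P alpha) d ->
       feq (SubLe C) (sub d hd) (fa Sub (sub c hc)))
   /\
   (forall (A : Ob C) (gamma beta : F A)
           (Zg : Ob C) (cg : Hom Zg A) (hg : mono cg)
           (Zb : Ob C) (cb : Hom Zb A) (hb : mono cb)
           (Zi : Ob C) (ci : Hom Zi A) (hi : mono ci),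
       isWComp P gamma cg -> isWComp P beta cb -> isWComp P (impl P gamma beta) ci ->
       feq (SubLe C) (sub ci hi) (impl Sub (sub cg hg) (sub cb hb)))).
Proof.
  split; [|split].
  - intros X Y alpha Z c W d Hc Hd. split.
    + apply (fa_adj Psi). unfold PsiLe, PsiRe; simpl.
      eapply (fa_key2 (P:=P)); eauto. apply wpb_comm.
    + pose proof (proj1 (fa_adj Psi (psi c) (fa Psi (psi c))) (le_refl Psi _)) as H.
      destruct (fa Psi (psi c)) as [V f]. unfold PsiLe, PsiRe in *; simpl in *.
      destruct H as [k Ek].
      destruct (wpb_univ wp (f:=pr1) (g:=f) (u:=pmap f (idm Y)) (v:=pr1) (@pmap_pr1 _ _ _ _ f)) as [h [E1 E2]].
      eapply (fa_key (P:=P)); [exact Hc|exact Hd|]. exists (k ∘ h). rewrite comp_assoc, Ek. exact E1.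
  - intros A gamma beta Zg cg Zb cb Zi ci Hg Hb Hi. split.
    + apply (impl_spec Psi).
      pose proof (proj1 (meet_spec Psi (psi ci) (psi cg) _) (le_refl Psi _)) as [H1 H2].
      destruct (meet Psi (psi ci) (psi cg)) as [M m]. unfold PsiLe in *; simpl in *.
      eapply (impl_key1 (P:=P)); [exact Hg|exact Hb|exact Hi|exact H1|exact H2].
    + pose proof (proj1 (impl_spec Psi (psi cg) (psi cb) _) (le_refl Psi _)) as H.
      destruct (impl Psi (psi cg) (psi cb)) as [V f]. unfold PsiLe; simpl.
      destruct (proj1 Pcomp V (re _ _ f gamma)) as [E [e He]].
      eapply (impl_key2 (P:=P) Pcomp); [exact Hb|exact Hi|exact He|].
      change (PsiLe C A (psi (f ∘ e)) (psi cb)).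
      eapply (le_trans Psi). 2: exact H.
      apply (meet_spec Psi). split.
      * exists e. reflexivity.
      * eapply (fg_cg (P:=P)); [exact Hg|exact He].
  - intros Strong pb Sub. split.
    + intros X Y alpha Z c hc W d hd Hc Hd. split.
      * apply (fa_adj Sub). unfold SubLe, SubRe; simpl.
        eapply (fa_key2 (P:=P)); eauto. apply mpb_comm.
      * pose proof (proj1 (fa_adj Sub (sub c hc) (fa Sub (sub c hc))) (le_refl Sub _)) as H.
        destruct (fa Sub (sub c hc)) as [V [f hf]]. unfold SubLe, SubRe in *; simpl in *.
        destruct H as [k Ek].
        destruct (mpb_ex pb (g:=pr1) (m:=f) hf (u:=pmap f (idm Y)) (v:=pr1) (@pmap_pr1 _ _ _ _ f)) as [h [E1 E2]].
        eapply (fa_key (P:=P)); [exact Hc|exact Hd|]. exists (k ∘ h). rewrite comp_assoc, Ek. exact E1.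
    + intros A gamma beta Zg cg hg Zb cb hb Zi ci hi Hg Hb Hi. split.
      * apply (impl_spec Sub).
        pose proof (proj1 (meet_spec Sub (sub ci hi) (sub cg hg) _) (le_refl Sub _)) as [H1 H2].
        destruct (meet Sub (sub ci hi) (sub cg hg)) as [M [m hm]]. unfold SubLe in *; simpl in *.
        eapply (impl_key1 (P:=P)); [exact Hg|exact Hb|exact Hi|exact H1|exact H2].
      * pose proof (proj1 (impl_spec Sub (sub cg hg) (sub cb hb) _) (le_refl Sub _)) as H.
        destruct (impl Sub (sub cg hg) (sub cb hb)) as [V [f hf]]. unfold SubLe; simpl.
        destruct (Strong V (re _ _ f gamma)) as [E [e [He hme]]].
        eapply (impl_key2 (P:=P) Pcomp); [exact Hb|exact Hi|exact He|].
        change (SubLe C A (sub (f ∘ e) (comp_mono hf hme)) (sub cb hb)).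
        eapply (le_trans Sub). 2: exact H.
        apply (meet_spec Sub). split.
        -- exists e. reflexivity.
        -- eapply (fg_cg (P:=P)); [exact Hg|exact He].
Qed.
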